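(* Let $(V_1, V_2)$ be an isometric pair on $\mathcal{H}$ and let $\mathcal{W} = \ker (V_1V_2)^*$, $\mathcal{W}_i = \ker V_i^*$ ($i=1,2$). Suppose $(\ker C(V_1, V_2))^\perp = \mathcal{W}$. Then $\dim \mathcal{W}_1 = \dim \mathcal{W}_2$. In particular, if $\mathcal{W}$ is finite-dimensional, then $\dim \mathcal{W}$ is even.
   Context: All Hilbert spaces are complex and separable. An isometric pair is a pair $(V_1,V_2)$ of commuting isometries. $C(V_1,V_2) := I - V_1V_1^* - V_2V_2^* + V_1V_2V_1^*V_2^*$. *)

(* Defs.v *)
From mathcomp Require Import all_boot all_algebra.
From mathcomp Require Import all_classical reals complex.
Set Implicit Arguments. Unset Strict Implicit. Unset Printing Implicit Defensive.
Import GRing.Theory Num.Theory.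
Local Open Scope ring_scope.
Local Open Scope classical_set_scope.

Section Hilbert.
Variable R : realType.
Local Notation C := R[i].
Variable H : lmodType C.
Variable ip : H -> H -> C.

Definition is_inner_product : Prop :=
  [/\ (forall x y z, ip (x + y) z = ip x z + ip y z),
      (forall (a : C) x y, ip (a *: x) y = a * ip x y),
      (forall x y, ip y x = (ip x y)^*),
      (forall x, 0 <= ip x x) &
      (forall x, ip x x = 0 -> x = 0)].

Definition ipnorm (x : H) : R := Num.sqrt (complex.Re (ip x x)).

Definition ip_complete : Prop :=
  forall u : nat -> H,
    (forall e : R, 0 < e -> exists N, forall m n, (N <= m)%N -> (N <= n)%N ->
        ipnorm (u m - u n) < e) ->
    exists l : H, forall e : R, 0 < e -> exists N, forall n, (N <= n)%N ->
        ipnorm (u n - l) < e.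

Definition ip_separable : Prop :=
  exists d : nat -> H, forall (x : H) (e : R), 0 < e -> exists n, ipnorm (x - d n) < e.

Definition is_hilbert_space : Prop :=
  [/\ is_inner_product, ip_complete & ip_separable].

Definition is_adjoint (T Ts : H -> H) : Prop :=
  forall x y, ip (T x) y = ip x (Ts y).

Definition is_linear_op (T : H -> H) : Prop :=
  (forall x y, T (x + y) = T x + T y) /\ (forall (a : C) x, T (a *: x) = a *: T x).

Definition is_isometry (T : H -> H) : Prop :=
  is_linear_op T /\ forall x y, ip (T x) (T y) = ip x y.

Definition isometric_pair (V1 V2 : H -> H) : Prop :=
  [/\ is_isometry V1, is_isometry V2 & forall x, V1 (V2 x) = V2 (V1 x)].

Definition kernel (T : H -> H) : set H := [set x | T x = 0].

Definition orth_compl (S : set H) : set H := [set y | forall x, S x -> ip x y = 0].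

Definition defect_op (V1 V2 V1s V2s : H -> H) : H -> H :=
  fun x => x - V1 (V1s x) - V2 (V2s x) + V1 (V2 (V1s (V2s x))).

Definition is_onb (I : Type) (W : set H) (b : I -> H) : Prop :=
  [/\ (forall i, W (b i)),
      (forall i j, ip (b i) (b j) = if `[< i = j >] then 1 else 0) &
      (forall x, W x -> (forall i, ip (b i) x = 0) -> x = 0)].

(* Hilbert dimensions agree: W1 and W2 admit orthonormal bases indexed by
   the same set (i.e. of equal cardinality). *)
Definition same_hdim (W1 W2 : set H) : Prop :=
  exists (I : Type) (b1 b2 : I -> H), is_onb W1 b1 /\ is_onb W2 b2.

End Hilbert.

(* Main.v *)
Require Import Defs.
From mathcomp Require Import all_boot all_algebra.
From mathcomp Require Import all_classical reals complex.
From mathcomp.algebra_tactics Require Import ring lra.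
Import GRing.Theory Num.Theory order.Order.TTheory.
Local Open Scope ring_scope.
Local Open Scope classical_set_scope.
Set Implicit Arguments. Unset Strict Implicit. Unset Printing Implicit Defensive.

Lemma core_dim (F : fieldType) (V : lmodType F) m k (u : 'I_m -> V) (f : 'I_k -> V)
   (c : 'I_m -> 'I_k -> F) :
 (forall a : 'I_m -> F, \sum_i a i *: u i = 0 -> forall i, a i = 0) ->
 (forall i, u i = \sum_j c i j *: f j) -> (m <= k)%N.
Proof.
move=> indep hu; rewrite leqNgt; apply/negP => ltkm.
pose M : 'M[F]_(m, k) := \matrix_(i, j) c i j.
have nfree : ~~ row_free M.
  rewrite /row_free; apply/negP => /eqP e.
  by have := rank_leq_col M; rewrite e leqNgt ltkm.
have kz : kermx M != 0 by rewrite kermx_eq0.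
have [i hi] : exists i, row i (kermx M) != 0.
  case: (boolP [exists i, row i (kermx M) != 0]) => [/existsP //| hn].
  move/negP: kz; case; apply/eqP/row_matrixP => i; rewrite row0.
  apply/eqP/negPn/negP => nz; move/negP: hn; apply; by apply/existsP; exists i.
set v := row i (kermx M) in hi.
have vM : v *m M = 0 by apply/eqP; rewrite -sub_kermx row_sub.
have a0 := indep (fun l => v 0 l).
suff hs : \sum_l v 0 l *: u l = 0.
  move/negP: hi; apply; apply/eqP/rowP => l; by rewrite (a0 hs l) mxE.
transitivity (\sum_j (v *m M) 0 j *: f j); last first.
  by rewrite vM; apply: big1 => j _; rewrite mxE scale0r.
under eq_bigr do rewrite hu scaler_sumr.
rewrite exchange_big /=; apply: eq_bigr => j _.
rewrite !mxE scaler_suml; apply: eq_bigr => l _.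
by rewrite scalerA [M _ _]mxE.
Qed.

Section IP.
Variable R : realType.
Local Notation C := R[i].
Variable H : lmodType C.
Variable ip : H -> H -> C.
Hypothesis hip : is_inner_product ip.

Lemma ipDl x y z : ip (x + y) z = ip x z + ip y z.
Proof. by case: hip => h _ _ _ _; apply: h. Qed.
Lemma ipZl a x y : ip (a *: x) y = a * ip x y.
Proof. by case: hip => _ h _ _ _; apply: h. Qed.
Lemma ipC x y : ip y x = (ip x y)^*.
Proof. by case: hip => _ _ h _ _; apply: h. Qed.
Lemma ip_ge0 x : 0 <= ip x x.
Proof. by case: hip => _ _ _ h _; apply: h. Qed.
Lemma ip_eq0 x : ip x x = 0 -> x = 0.
Proof. by case: hip => _ _ _ _ h; apply: h. Qed.

Lemma ipDr x y z : ip x (y + z) = ip x y + ip x z.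
Proof. by rewrite ipC ipDl rmorphD; congr (_ + _); rewrite [RHS]ipC. Qed.
Lemma ipZr a x y : ip x (a *: y) = a^* * ip x y.
Proof. by rewrite ipC ipZl rmorphM; congr (_ * _); rewrite [RHS]ipC. Qed.
Lemma ip0l y : ip 0 y = 0.
Proof. by have := ipZl 0 0 y; rewrite scale0r mul0r. Qed.
Lemma ip0r y : ip y 0 = 0.
Proof. by rewrite ipC ip0l conjC0. Qed.
Lemma ipNl x y : ip (- x) y = - ip x y.
Proof. by rewrite -scaleN1r ipZl mulN1r. Qed.
Lemma ipNr x y : ip y (- x) = - ip y x.
Proof. by rewrite ipC ipNl rmorphN [ip y x]ipC. Qed.
Lemma ipBl x y z : ip (x - y) z = ip x z - ip y z.
Proof. by rewrite ipDl ipNl. Qed.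
Lemma ipBr x y z : ip z (x - y) = ip z x - ip z y.
Proof. by rewrite ipDr ipNr. Qed.
Lemma ip_suml (I : Type) (r : seq I) (P : pred I) (F : I -> H) y :
  ip (\sum_(i <- r | P i) F i) y = \sum_(i <- r | P i) ip (F i) y.
Proof.
by apply: (big_morph (fun x => ip x y)); [move=> a b; rewrite ipDl | rewrite ip0l].
Qed.
Lemma ip_sumr (I : Type) (r : seq I) (P : pred I) (F : I -> H) y :
  ip y (\sum_(i <- r | P i) F i) = \sum_(i <- r | P i) ip y (F i).
Proof.
by apply: (big_morph (fun x => ip y x)); [move=> a b; rewrite ipDr | rewrite ip0r].
Qed.
Lemma ip_nondeg x y : (forall z, ip z x = ip z y) -> x = y.
Proof.
move=> h; apply/eqP; rewrite -subr_eq0; apply/eqP/ip_eq0.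
by rewrite ipBr h subrr.
Qed.

Lemma lin0 T : @is_linear_op R H T -> T 0 = 0.
Proof. by case=> _ h; have := h 0 0; rewrite !scale0r. Qed.
Lemma linN T : @is_linear_op R H T -> forall x, T (- x) = - T x.
Proof. by case=> _ h x; rewrite -scaleN1r h scaleN1r. Qed.
Lemma linD T : @is_linear_op R H T -> forall x y, T (x + y) = T x + T y.
Proof. by case. Qed.
Lemma linZ T : @is_linear_op R H T -> forall a x, T (a *: x) = a *: T x.
Proof. by case. Qed.
Lemma linB T : @is_linear_op R H T -> forall x y, T (x - y) = T x - T y.
Proof. by move=> hT x y; rewrite linD // linN. Qed.
Lemma lin_sum T : @is_linear_op R H T -> forall (I : Type) (r : seq I) (P : pred I) (F : I -> H),
  T (\sum_(i <- r | P i) F i) = \sum_(i <- r | P i) T (F i).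
Proof.
move=> hT I r P F.
by apply: (big_morph T); [move=> a b; rewrite linD | rewrite lin0].
Qed.

Lemma adj_linear T Ts : is_adjoint ip T Ts -> @is_linear_op R H Ts.
Proof.
move=> hA; split.
- move=> x y; apply: ip_nondeg => z; by rewrite -hA !ipDr -!hA.
- move=> a x; apply: ip_nondeg => z; by rewrite -hA !ipZr -!hA.
Qed.

End IP.

Section Ortho.
Variable R : realType.
Local Notation C := R[i].
Variable H : lmodType C.
Variable ip : H -> H -> C.
Hypothesis hip : is_inner_product ip.

Lemma ip_real x : ip x x = (complex.Re (ip x x))%:C%C.
Proof. by rewrite RRe_real // ger0_real // ip_ge0. Qed.

Lemma Re_ip_ge0 x : 0 <= complex.Re (ip x x).
Proof. by rewrite -ler0c -ip_real ip_ge0. Qed.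

Lemma normalize x : x <> 0 -> exists c : C, ip (c *: x) (c *: x) = 1.
Proof.
move=> nx; set r := complex.Re (ip x x).
have r0 : 0 <= r by apply: Re_ip_ge0.
have rn0 : r != 0.
  apply/negP => /eqP r00; apply: nx; apply: (ip_eq0 hip).
  by rewrite ip_real // -/r r00.
have s0 : Num.sqrt r != 0 by rewrite sqrtr_eq0 -ltNge lt_neqAle eq_sym rn0.
exists ((Num.sqrt r)^-1)%:C%C.
rewrite (ipZl hip) (ipZr hip) geC0_conj ?ler0c ?invr_ge0 ?sqrtr_ge0 //.
rewrite ip_real // -/r -!rmorphM /=.
rewrite -{3}(sqr_sqrtr r0) mulrA -expr2 exprVn mulVf ?expr1n // expf_neq0 //.
Qed.



Definition orthoS (S : set H) :=
  (forall x, S x -> ip x x = 1) /\ (forall x y, S x -> S y -> x <> y -> ip x y = 0).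

Lemma exists_maxortho (W : set H) (WZ : forall a x, W x -> W (a *: x)) :
  exists S, [/\ S `<=` W, orthoS S &
    (forall x, W x -> (forall s, S s -> ip s x = 0) -> x = 0)].
Proof.
have [A [[AW Ao] Amax]] : exists A, (A `<=` W /\ orthoS A) /\
    forall B, A `<` B -> ~ (B `<=` W /\ orthoS B).
  apply: (@Zorn_bigcup H [set A | A `<=` W /\ orthoS A]).
  move=> F FP Ftot; split.
    by move=> x [X FX Xx]; exact: (FP X FX).1 _ Xx.
  split.
    by move=> x [X FX Xx]; exact: (FP X FX).2.1 _ Xx.
  move=> x y [X FX Xx] [Y FY Yy] nxy.
  case: (Ftot X Y FX FY) => [XY|YX].
    exact: (FP Y FY).2.2 x y (XY _ Xx) Yy nxy.
  exact: (FP X FX).2.2 x y Xx (YX _ Yy) nxy.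
exists A; split => // x Wx hx; case: (pselect (x = 0)) => // nx0; exfalso.
have [c hc] := normalize nx0.
set y := c *: x in hc.
have hy : forall s, A s -> ip s y = 0 by move=> s As; rewrite ipZr // hx // mulr0.
have nAy : ~ A y by move=> Ay; move: (hy _ Ay); rewrite hc => /eqP; rewrite oner_eq0.
apply: (Amax (A `|` [set y])).
  split; first by move=> z Az; left.
  by move=> h; apply: nAy; apply: h; right.
split.
  by move=> z [Az|->]; [exact: AW | exact: WZ].
split.
  by move=> z [Az|->]; [exact: Ao.1 |].
move=> z t [Az|->] [At|->] nzt.
- exact: Ao.2.
- exact: hy.
- by rewrite ipC // hy // conjC0.
- by case: nzt.
Qed.


Lemma ipnorm_small z : ipnorm ip z < 1/2 -> complex.Re (ip z z) < 1/4.
Proof.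
rewrite /ipnorm => h; have r0 := Re_ip_ge0 z.
rewrite -(sqr_sqrtr r0); have s0 := sqrtr_ge0 (complex.Re (ip z z)).
move: h s0; set s := Num.sqrt _ => h s0; nra.
Qed.

Lemma parallelogram a b :
  ip (a - b) (a - b) + ip (a + b) (a + b) = 2 * ip a a + 2 * ip b b.
Proof. rewrite !(ipBl hip, ipBr hip, ipDl hip, ipDr hip); ring. Qed.

Lemma ortho_countable (S : set H) : ip_separable ip -> orthoS S -> countable S.
Proof.
case=> d hd [Sn So].
have : forall x, exists n, S x -> ipnorm ip (x - d n) < 1/2.
  move=> x; case: (pselect (S x)) => Sx; last by exists 0%N.
  have [n hn] : exists n, ipnorm ip (x - d n) < 1/2 by apply: hd; lra.
  by exists n.
case/choice => g hg.
apply/pcard_injP; exists g => x y /set_mem Sx /set_mem Sy gxy.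
case: (pselect (x = y)) => // nxy; exfalso.
have ha := ipnorm_small (hg x Sx); have hb := ipnorm_small (hg y Sy).
rewrite -gxy in hb.
set a := x - d (g x) in ha; set b := y - d (g x) in hb.
have e1 : ip (a - b) (a - b) = 2.
  have -> : a - b = x - y by rewrite /a /b; rewrite opprB addrA subrK.
  rewrite !(ipBl hip, ipBr hip) Sn // Sn // So // So //; last by move=> e; apply: nxy.
  by ring.
have := parallelogram a b; rewrite e1.
rewrite (ip_real a) (ip_real b) (ip_real (a + b)).
set ra := complex.Re (ip a a); set rb := complex.Re (ip b b); set rp := complex.Re (ip (a + b) (a + b)).
move=> e.
have e2 : ((2 + rp)%:C%C : C) = (2 * ra + 2 * rb)%:C%C.
  by rewrite !rmorphD !rmorphM /= !rmorph_nat.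
have := complexI e2; have := Re_ip_ge0 (a + b); rewrite -/rp.
move: ha hb; rewrite -/ra -/rb; lra.
Qed.


Lemma onb_of_enum (W S : set H) (I : Type) (g : I -> H) :
  S `<=` W -> orthoS S -> (forall x, W x -> (forall s, S s -> ip s x = 0) -> x = 0) ->
  injective g -> (forall i, S (g i)) -> (forall s, S s -> exists i, g i = s) ->
  is_onb ip W g.
Proof.
move=> SW [Sn So] Smax ginj gS gsurj; split.
- by move=> i; apply: SW.
- move=> i j; case: (pselect (i = j)) => [<-|nij].
    by rewrite asboolT // Sn.
  by rewrite asboolF // So // => /ginj.
- move=> x Wx h; apply: Smax => // s Ss; have [i <-] := gsurj s Ss; exact: h.
Qed.

Lemma onb_span (T : H -> H) k (f : 'I_k -> H) : @is_linear_op R H T ->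
  is_onb ip (kernel T) f -> forall x, kernel T x -> x = \sum_j ip x (f j) *: f j.
Proof.
move=> lT [fW fo fmax] x Tx; apply/eqP; rewrite -subr_eq0; apply/eqP; apply: fmax.
  rewrite /kernel /= linB // lin_sum // Tx sub0r big1 ?oppr0 // => j _.
  by rewrite linZ // fW scaler0.
move=> i; rewrite ipBr // ip_sumr // (bigD1 i) //= ipZr // fo asboolT // mulr1.
rewrite big1 ?addr0; first by rewrite [ip x (f i)]ipC // conjCK subrr.
move=> j nji; rewrite ipZr // fo asboolF ?mulr0 // => e; by rewrite e eqxx in nji.
Qed.

Lemma orth_indep m (u : 'I_m -> H) : (forall i, ip (u i) (u i) = 1) ->
  (forall i j, i != j -> ip (u i) (u j) = 0) ->
  forall a : 'I_m -> C, \sum_i a i *: u i = 0 -> forall i, a i = 0.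
Proof.
move=> un uo a ha i.
have := congr1 (fun z => ip z (u i)) ha => /=.
rewrite ip0l // ip_suml // (bigD1 i) //= ipZl // un mulr1 big1 ?addr0 //.
by move=> j nji; rewrite ipZl // uo ?mulr0.
Qed.

Lemma indep_lin (T Q : H -> H) m (u : 'I_m -> H) :
  @is_linear_op R H T -> @is_linear_op R H Q ->
  (forall x, kernel Q x -> T x = 0 -> x = 0) -> (forall i, kernel Q (u i)) ->
  (forall a : 'I_m -> C, \sum_i a i *: u i = 0 -> forall i, a i = 0) ->
  (forall a : 'I_m -> C, \sum_i a i *: T (u i) = 0 -> forall i, a i = 0).
Proof.
move=> lT lQ Tinj uQ ui a ha; apply: ui; apply: Tinj.
  rewrite /kernel /= lin_sum // big1 // => i _; by rewrite linZ // uQ scaler0.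
rewrite lin_sum //; rewrite -[RHS]ha; apply: eq_bigr => i _; exact: linZ.
Qed.

End Ortho.

Definition toI (m : nat) (i : 'I_m) : set_type `I_m :=
  exist _ (val i) (mem_set (ltn_ord i)).

Lemma toI_inj m : injective (@toI m).
Proof. by move=> i j /(congr1 val) /= /val_inj. Qed.

Lemma enum_le (T : Type) (S : set T) m :
  (`I_m #<= S)%card -> exists u : 'I_m -> T, injective u /\ forall i, S (u i).
Proof.
move/card_leP/injfunPex => [f _ finj].
exists (fun i => val (f (toI i))); split.
  move=> i j /val_inj /finj; rewrite !in_setT => /(_ isT isT) /toI_inj //.
by move=> i; exact: set_mem (valP (f (toI i))).
Qed.

Lemma enum_eq (T : Type) (S : set T) k :
  (S #= `I_k)%card -> exists u : 'I_k -> T,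
    [/\ injective u, forall i, S (u i) & forall s, S s -> exists i, u i = s].
Proof.
move/card_bijP => [f [g fg gf]].
exists (fun i => val (g (toI i))); split.
- by move=> i j /val_inj /(can_inj gf) /toI_inj.
- by move=> i; exact: set_mem (valP (g (toI i))).
- move=> s Ss; pose t : set_type S := exist _ s (mem_set Ss).
  have lt : (val (f t) < k)%N by exact: set_mem (valP (f t)).
  exists (Ordinal lt).
  have -> : toI (Ordinal lt) = f t by apply: val_inj.
  by rewrite fg.
Qed.

Section Main.
Variable R : realType.
Local Notation C := R[i].
Variable H : lmodType C.
Variable ip : H -> H -> C.
Hypothesis hip : is_inner_product ip.

Local Notation lin T := (@is_linear_op R H T).

Lemma kerZ (T : H -> H) : lin T -> forall a x, kernel T x -> kernel T (a *: x).
Proof. by move=> lT a x; rewrite /kernel /= => Tx; rewrite linZ // Tx scaler0. Qed.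

Lemma onb_orth I (W : set H) (e : I -> H) : is_onb ip W e ->
  (forall i, ip (e i) (e i) = 1) /\ (forall i j, i <> j -> ip (e i) (e j) = 0).
Proof.
case=> _ eo _; split; first by move=> i; rewrite eo asboolT.
by move=> i j nij; rewrite eo asboolF.
Qed.

Lemma enum_orth (S : set H) m (u : 'I_m -> H) : orthoS ip S -> injective u ->
  (forall i, S (u i)) ->
  (forall i, ip (u i) (u i) = 1) /\ (forall i j, i != j -> ip (u i) (u j) = 0).
Proof.
move=> [Sn So] ui uS; split; first by move=> i; apply: Sn.
move=> i j nij; apply: So => // /ui eij; by rewrite eij eqxx in nij.
Qed.

Lemma bound (Qa Qb T : H -> H) k m (f : 'I_k -> H) (u : 'I_m -> H) :
  lin Qa -> lin Qb -> lin T -> is_onb ip (kernel Qa) f ->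
  (forall i, kernel Qb (u i)) ->
  (forall i, ip (u i) (u i) = 1) -> (forall i j, i != j -> ip (u i) (u j) = 0) ->
  (forall x, kernel Qb x -> kernel Qa (T x)) ->
  (forall x, kernel Qb x -> T x = 0 -> x = 0) -> (m <= k)%N.
Proof.
move=> lQa lQb lT fonb uQ un uo TQ Tinj.
apply: (@core_dim _ _ m k (fun i => T (u i)) f (fun i j => ip (T (u i)) (f j))).
  apply: (indep_lin lT lQb Tinj uQ); exact: (orth_indep hip un uo).
move=> i; apply: (onb_span hip lQa fonb); exact: TQ.
Qed.

Lemma onb_fin (Q : H -> H) (S : set H) k : lin Q -> S `<=` kernel Q -> orthoS ip S ->
  (forall x, kernel Q x -> (forall s, S s -> ip s x = 0) -> x = 0) ->
  (S #= `I_k)%card -> exists e : 'I_k -> H, is_onb ip (kernel Q) e.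
Proof.
move=> lQ SQ So Smax /enum_eq [e [ei eS esurj]].
by exists e; apply: (onb_of_enum SQ So Smax ei eS esurj).
Qed.

Lemma bound_sets (Qa Qb T : H -> H) (Sa Sb : set H) k m :
  lin Qa -> lin Qb -> lin T ->
  Sa `<=` kernel Qa -> orthoS ip Sa ->
  (forall x, kernel Qa x -> (forall s, Sa s -> ip s x = 0) -> x = 0) ->
  Sb `<=` kernel Qb -> orthoS ip Sb ->
  (forall x, kernel Qb x -> kernel Qa (T x)) ->
  (forall x, kernel Qb x -> T x = 0 -> x = 0) ->
  (Sa #= `I_k)%card -> (`I_m #<= Sb)%card -> (m <= k)%N.
Proof.
move=> lQa lQb lT SaQ Sao Samax SbQ Sbo TQ Tinj ea /enum_le [u [ui uS]].
have [f fonb] := onb_fin lQa SaQ Sao Samax ea.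
have [un uo] := enum_orth Sbo ui uS.
apply: (bound lQa lQb lT fonb _ un uo TQ Tinj) => i; exact: SbQ.
Qed.

End Main.

Section Ops.
Variable R : realType.
Local Notation C := R[i].
Variable H : lmodType C.
Variable ip : H -> H -> C.
Variables V1 V2 V1s V2s : H -> H.
Hypothesis hip : is_inner_product ip.
Hypothesis hp : isometric_pair ip V1 V2.
Hypothesis a1 : is_adjoint ip V1 V1s.
Hypothesis a2 : is_adjoint ip V2 V2s.
Local Notation lin T := (@is_linear_op R H T).

Lemma l1 : lin V1. Proof. by case: hp => -[]. Qed.
Lemma l2 : lin V2. Proof. by case: hp => _ []. Qed.
Lemma l1s : lin V1s. Proof. exact: adj_linear a1. Qed.
Lemma l2s : lin V2s. Proof. exact: adj_linear a2. Qed.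
Lemma iso1 x y : ip (V1 x) (V1 y) = ip x y. Proof. by case: hp => -[] _ ->. Qed.
Lemma iso2 x y : ip (V2 x) (V2 y) = ip x y. Proof. by case: hp => _ [] _ ->. Qed.
Lemma K1 x : V1s (V1 x) = x.
Proof. by apply: (ip_nondeg hip) => z; rewrite -a1 iso1. Qed.
Lemma commS x : V2s (V1s x) = V1s (V2s x).
Proof.
apply: (ip_nondeg hip) => z; rewrite -a2 -a1 -a1 -a2.
by case: hp => _ _ ->.
Qed.

Definition Wop x := V2s (V1s x).
Lemma lW : lin Wop.
Proof.
split => [x y|a x]; rewrite /Wop.
  by rewrite (linD l1s) (linD l2s).
by rewrite (linZ l1s) (linZ l2s).
Qed.

Definition P1 x := x - V1 (V1s x).
Definition P2 x := x - V2 (V2s x).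
Lemma lP1 : lin P1.
Proof.
split => [x y|a x]; rewrite /P1.
  rewrite (linD l1s) (linD l1); by rewrite opprD addrACA.
by rewrite (linZ l1s) (linZ l1) scalerBr.
Qed.
Lemma lP2 : lin P2.
Proof.
split => [x y|a x]; rewrite /P2.
  rewrite (linD l2s) (linD l2); by rewrite opprD addrACA.
by rewrite (linZ l2s) (linZ l2) scalerBr.
Qed.

Lemma P1W x : kernel V1s (P1 x).
Proof. by rewrite /kernel /= /P1 (linB l1s) K1 subrr. Qed.
Lemma P2W x : kernel V2s (P2 x).
Proof.
rewrite /kernel /= /P2 (linB l2s).
have -> : V2s (V2 (V2s x)) = V2s x by apply: (ip_nondeg hip) => z; rewrite -a2 iso2.
by rewrite subrr.
Qed.

Hypothesis hC : orth_compl ip (kernel (defect_op V1 V2 V1s V2s)) = kernel Wop.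

Lemma inj12 x : kernel V1s x -> P2 x = 0 -> x = 0.
Proof.
rewrite /kernel /= => h1 h2.
have hW : kernel Wop x by rewrite /kernel /= /Wop h1 (lin0 l2s).
have : orth_compl ip (kernel (defect_op V1 V2 V1s V2s)) x by rewrite hC.
move=> /(_ x) hx; apply: (ip_eq0 hip); apply: hx.
rewrite /kernel /= /defect_op -commS h1 !(lin0 l1s, lin0 l2, lin0 l1, lin0 l2s).
by move: h2; rewrite /P2 subr0 addr0.
Qed.

Lemma inj21 x : kernel V2s x -> P1 x = 0 -> x = 0.
Proof.
rewrite /kernel /= => h1 h2.
have hW : kernel Wop x by rewrite /kernel /= /Wop commS h1 (lin0 l1s).
have : orth_compl ip (kernel (defect_op V1 V2 V1s V2s)) x by rewrite hC.
move=> /(_ x) hx; apply: (ip_eq0 hip); apply: hx.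
rewrite /kernel /= /defect_op h1 !(lin0 l1s, lin0 l2, lin0 l1, lin0 l2s).
by move: h2; rewrite /P1 subr0 addr0.
Qed.


Hypothesis sep : ip_separable ip.

Section Sets.
Variables S1 S2 : set H.
Hypothesis S1W : S1 `<=` kernel V1s.
Hypothesis S1o : orthoS ip S1.
Hypothesis S1max : forall x, kernel V1s x -> (forall s, S1 s -> ip s x = 0) -> x = 0.
Hypothesis S2W : S2 `<=` kernel V2s.
Hypothesis S2o : orthoS ip S2.
Hypothesis S2max : forall x, kernel V2s x -> (forall s, S2 s -> ip s x = 0) -> x = 0.

Lemma le12 k m : (S1 #= `I_k)%card -> (`I_m #<= S2)%card -> (m <= k)%N.
Proof.
apply: (bound_sets hip l1s l2s lP1 S1W S1o S1max S2W S2o).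
  by move=> x _; apply: P1W.
exact: inj21.
Qed.

Lemma le21 k m : (S2 #= `I_k)%card -> (`I_m #<= S1)%card -> (m <= k)%N.
Proof.
apply: (bound_sets hip l2s l1s lP2 S2W S2o S2max S1W S1o).
  by move=> x _; apply: P2W.
exact: inj12.
Qed.

Lemma fin_inf_le (S : set H) k : (S #= `I_k)%card -> (`I_k #<= S)%card.
Proof. by rewrite card_eq_le => /andP[]. Qed.

Lemma nat_le (S : set H) m : ([set: nat] #<= S)%card -> (`I_m #<= S)%card.
Proof. by apply: card_le_trans; apply: subset_card_le. Qed.

Lemma S12_eq : (S1 #= S2)%card.
Proof.
have c1 := ortho_countable hip sep S1o; have c2 := ortho_countable hip sep S2o.
case: (pselect (finite_set S1)) => [[k1 e1]|inf1];
  case: (pselect (finite_set S2)) => [[k2 e2]|inf2].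
- have h1 := le12 e1 (fin_inf_le e2); have h2 := le21 e2 (fin_inf_le e1).
  have ek : k1 = k2 by apply/eqP; rewrite eqn_leq h1 h2.
  subst k2; exact: card_eq_trans e1 (card_esym e2).
- have := le12 e1 (nat_le k1.+1 ((infiniteP S2).1 inf2)).
  by rewrite ltnn.
- have := le21 e2 (nat_le k2.+1 ((infiniteP S1).1 inf1)).
  by rewrite ltnn.
- have n1 : (S1 #= [set: nat])%card by apply: Cantor_Bernstein => //; exact/infiniteP.
  have n2 : (S2 #= [set: nat])%card by apply: Cantor_Bernstein => //; exact/infiniteP.
  exact: card_eq_trans n1 (card_esym n2).
Qed.


Lemma hdim : same_hdim ip (kernel V1s) (kernel V2s).
Proof.
have /card_bijP [f [g fg gf]] := S12_eq.
exists (set_type S1), (fun i => val i), (fun i => val (f i)); split.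
- apply: (onb_of_enum S1W S1o S1max).
  + exact: val_inj.
  + move=> i; exact: set_mem (valP i).
  + by move=> s Ss; exists (exist _ s (mem_set Ss)).
- apply: (onb_of_enum S2W S2o S2max).
  + by move=> i j /val_inj /(can_inj fg).
  + move=> i; exact: set_mem (valP (f i)).
  + by move=> s Ss; exists (g (exist _ s (mem_set Ss))); rewrite gf.
Qed.

Lemma lid : lin id. Proof. by split. Qed.

Lemma even_dim n (b : 'I_n -> H) : is_onb ip (kernel Wop) b -> ~~ odd n.
Proof.
move=> bonb.
have W1W : forall x, kernel V1s x -> kernel Wop x.
  by move=> x; rewrite /kernel /= /Wop => ->; rewrite (lin0 l2s).
have W2W : forall x, kernel V2s x -> kernel Wop (V1 x).
  by move=> x; rewrite /kernel /= /Wop K1.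
have fin1 : finite_set S1.
  apply: contrapT => inf1.
  have [u [ui uS]] := enum_le (nat_le n.+1 ((infiniteP S1).1 inf1)).
  have [un uo] := enum_orth S1o ui uS.
  have := bound hip lW l1s lid bonb (fun i => S1W (uS i)) un uo W1W (fun x _ h => h).
  by rewrite ltnn.
have fin2 : finite_set S2.
  apply: contrapT => inf2.
  have [u [ui uS]] := enum_le (nat_le n.+1 ((infiniteP S2).1 inf2)).
  have [un uo] := enum_orth S2o ui uS.
  have T1inj : forall x, kernel V2s x -> V1 x = 0 -> x = 0.
    by move=> x _ h; rewrite -(K1 x) h (lin0 l1s).
  have := bound hip lW l2s l1 bonb (fun i => S2W (uS i)) un uo W2W T1inj.
  by rewrite ltnn.
case: fin1 => k1 e1; case: fin2 => k2 e2.
have ek : k1 = k2.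
  by apply/eqP; rewrite eqn_leq (le12 e1 (fin_inf_le e2)) (le21 e2 (fin_inf_le e1)).
subst k2.
have [e eonb] := onb_fin l1s S1W S1o S1max e1.
have [f fonb] := onb_fin l2s S2W S2o S2max e2.
have [en eo] := onb_orth eonb; have [fn fo] := onb_orth fonb.
have [bn bo] := onb_orth bonb.
case: (eonb) => eW _ _; case: (fonb) => fW _ _; case: (bonb) => bW _ _.
pose g (i : 'I_(k1 + k1)) := match fintype.split i with inl a => e a | inr c => V1 (f c) end.
have gW : forall i, kernel Wop (g i).
  by move=> i; rewrite /g; case: (fintype.split i) => [a|c]; [apply: W1W | apply: W2W].
have gn : forall i, ip (g i) (g i) = 1.
  by move=> i; rewrite /g; case: (fintype.split i) => [a|c]; rewrite ?iso1.
have go : forall i j, i != j -> ip (g i) (g j) = 0.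
  move=> i j nij; rewrite /g.
  have nsp : fintype.split i <> fintype.split j by move/(can_inj splitK) => eij; rewrite eij eqxx in nij.
  move: nsp; case: (fintype.split i) => [a|c]; case: (fintype.split j) => [a'|c'] nsp.
  - by apply: eo => eaa; apply: nsp; rewrite eaa.
  - by rewrite ipC // a1 eW ip0r // rmorph0.
  - by rewrite a1 eW ip0r.
  - by rewrite iso1; apply: fo => ecc; apply: nsp; rewrite ecc.
have le1 : (k1 + k1 <= n)%N.
  exact: (bound hip lW lW lid bonb gW gn go (fun x h => h) (fun x _ h => h)).
have sl : forall a, fintype.split (lshift k1 a) = inl a := fun a => unsplitK (inl a).
have sr : forall c, fintype.split (rshift k1 c) = inr c := fun c => unsplitK (inr c).
have le2 : (n <= k1 + k1)%N.
  pose c (i : 'I_n) (l : 'I_(k1 + k1)) := match fintype.split l with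
    | inl a => ip (P1 (b i)) (e a) | inr c => ip (V1s (b i)) (f c) end.
  apply: (@core_dim _ _ n (k1 + k1) b g c).
    apply: (orth_indep hip bn) => i j nij; apply: bo => eij; by rewrite eij eqxx in nij.
  move=> i; set x := b i.
  have hx1 : x = P1 x + V1 (V1s x) by rewrite /P1 subrK.
  have hP : P1 x = \sum_a ip (P1 x) (e a) *: e a := onb_span hip l1s eonb (P1W x).
  have hV : V1s x = \sum_a ip (V1s x) (f a) *: f a := onb_span hip l2s fonb (bW i).
  rewrite big_split_ord /=; rewrite {1}hx1; congr (_ + _).
    by rewrite {1}hP; apply: eq_bigr => a _; rewrite /c /g sl.
  rewrite {1}hV (lin_sum l1); apply: eq_bigr => a _; rewrite /c /g sr.
  exact: (linZ l1).
have ek : n = (k1 + k1)%N by apply/eqP; rewrite eqn_leq le1 le2.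
by rewrite ek oddD addbb.
Qed.
End Sets.

Lemma final : same_hdim ip (kernel V1s) (kernel V2s) /\
  (forall (n : nat) (b : 'I_n -> H),
      is_onb ip (kernel (fun x => V2s (V1s x))) b -> ~~ odd n).
Proof.
have [S1 [S1W S1o S1max]] := exists_maxortho hip (kerZ l1s).
have [S2 [S2W S2o S2max]] := exists_maxortho hip (kerZ l2s).
split; first exact: (hdim S1W S1o S1max S2W S2o S2max).
move=> n b hb; exact: (even_dim S1W S1o S1max S2W S2o S2max hb).
Qed.

End Ops.

Unset Implicit Arguments.

Theorem proposition3p8 (R : realType) (H : lmodType R[i]) (ip : H -> H -> R[i])
    (V1 V2 V1s V2s : H -> H) :
  is_hilbert_space ip ->
  isometric_pair ip V1 V2 ->
  is_adjoint ip V1 V1s -> is_adjoint ip V2 V2s ->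
  orth_compl ip (kernel (defect_op V1 V2 V1s V2s)) = kernel (fun x => V2s (V1s x)) ->
  same_hdim ip (kernel V1s) (kernel V2s) /\
  (forall (n : nat) (b : 'I_n -> H),
      is_onb ip (kernel (fun x => V2s (V1s x))) b -> ~~ odd n).
Proof.
case=> hip _ sep hp a1 a2 hC.
exact: (final hip hp a1 a2 hC sep).
Qed.
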